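(* Let $X$ be a pure $d$-dimensional simplicial complex, $0\le k\le d-1$, let $\sigma\in X(k+i)$ with $i\ge1$, and let $c\subseteq\sigma$ with $|c|=k$. Then there exists exactly one face $r$ of $R_k(X)$ with $\bigcup r=\sigma$ and $\bigcap r=c$.
   Context: $X(j)$ = faces with $j+1$ elements. The representation complex $R_k(X)$ has vertex set $X(k)$ and, for $1\le i\le d-k$, $i$-faces the sets $S$ of $i+1$ distinct elements of $X(k)$ with $\bigcup S\in X(i+k)$ and $|\bigcap S|=k$ (plus the empty face). For a face $r$ of dimension $\ge1$, $\bigcap r$ is its core. *)

(* Defs.v *)
From mathcomp Require Import all_boot.
Set Implicit Arguments. Unset Strict Implicit. Unset Printing Implicit Defensive.

Definition simplicial_complex (T : finType) (X : {set {set T}}) : Prop :=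
  forall s t : {set T}, s \in X -> t \subset s -> t \in X.

Definition Xj (T : finType) (X : {set {set T}}) (j : nat) : {set {set T}} :=
  [set s in X | #|s| == j.+1].

Definition pure_dim (T : finType) (X : {set {set T}}) (d : nat) : Prop :=
  (exists s, s \in Xj X d) /\
  (forall s, s \in X -> #|s| <= d.+1) /\
  (forall s, s \in X -> exists t, t \in Xj X d /\ s \subset t).

Definition R_face (T : finType) (X : {set {set T}}) (d k : nat)
    (r : {set {set T}}) : Prop :=
  r \subset Xj X k /\
  (r = set0 \/ #|r| = 1 \/
   exists i, [/\ 1 <= i <= d - k, #|r| = i.+1,
                 \bigcup_(s in r) s \in Xj X (i + k)
               & #|\bigcap_(s in r) s| = k]).

(* Main.v *)
Require Import Defs.
From mathcomp Require Import all_boot.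
From mathcomp Require Import zify.

Section Aux.
Variables (T : finType) (sigma c : {set T}) (k : nat).
Hypothesis csig : c \subset sigma.
Hypothesis cardc : #|c| = k.

Definition r0 : {set {set T}} := [set w |: c | w in sigma :\: c].

Lemma r0P (s : {set T}) :
  reflect [/\ c \subset s, s \subset sigma & #|s| = k.+1] (s \in r0).
Proof.
apply: (iffP imsetP).
  move=> [w]; rewrite inE => /andP[wc ws] ->.
  split; first exact: subsetUr.
    by rewrite subUset sub1set ws csig.
  by rewrite cardsU1 wc cardc.
move=> [cs ss cards].
have : #|s :\: c| == 1.
  by rewrite cardsD (setIidPr cs) cards cardc subSnn.
move/cards1P=> [w hw].
have ws : w \in s :\: c by rewrite hw set11.
move: (ws); rewrite inE => /andP[wc wss].
exists w; first by rewrite inE wc (subsetP ss).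
apply/setP=> x; rewrite in_setU1.
case xc: (x \in c); first by rewrite orbT (subsetP cs).
rewrite orbF; apply/idP/idP.
  move=> xs; have : x \in s :\: c by rewrite inE xc xs.
  by rewrite hw in_set1.
by move/eqP ->.
Qed.
End Aux.
Arguments r0 {T}.
Arguments r0P {T sigma c k}.

Theorem mainTheorem12 (T : finType) (X : {set {set T}}) (d k i : nat)
    (sigma c : {set T}) :
  simplicial_complex X -> pure_dim X d -> k <= d - 1 -> 0 < d ->
  1 <= i -> sigma \in Xj X (k + i) ->
  c \subset sigma -> #|c| = k ->
  exists! r : {set {set T}},
    [/\ R_face X d k r, \bigcup_(s in r) s = sigma & \bigcap_(s in r) s = c].
Proof.
move=> scX [_ [bdX _]] kd d0 i1 hsig csig cardc.
move: hsig; rewrite inE => /andP[sigX /eqP csg].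
have cD : #|sigma :\: c| = i.+1.
  by rewrite cardsD (setIidPr csig) csg cardc; lia.
have other v : exists2 w, w \in sigma :\: c & w != v.
  have := cardsD1 v (sigma :\: c); rewrite cD => h.
  have : 0 < #|sigma :\: c :\ v| by move: h; case: (v \in _) => /=; lia.
  rewrite card_gt0 => /set0Pn [w]; rewrite !inE => /andP[wv wsc].
  by exists w; rewrite ?inE.
have U : \bigcup_(s in r0 sigma c) s = sigma.
  apply/eqP; rewrite eqEsubset; apply/andP; split.
    by apply/bigcupsP => s /(r0P csig cardc s) [].
  apply/subsetP => v vs; apply/bigcupP.
  case vc: (v \in c).
    have [w wsc _] := other v.
    exists (w |: c); first by apply/imsetP; exists w.
    by rewrite in_setU1 vc orbT.
  exists (v |: c); last by rewrite setU11.
  by apply/imsetP; exists v; rewrite // inE vc vs.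
have I : \bigcap_(s in r0 sigma c) s = c.
  apply/eqP; rewrite eqEsubset; apply/andP; split; last first.
    by apply/bigcapsP => s /(r0P csig cardc s) [].
  apply/subsetP => v /bigcapP vI.
  case vc: (v \in c) => //.
  have [w wsc wv] := other v.
  have := vI (w |: c) (imset_f _ wsc).
  by rewrite in_setU1 vc orbF eq_sym (negbTE wv).
exists (r0 sigma c); split.
  split => //; split.
    apply/subsetP => s /(r0P csig cardc s) [_ ss cs].
    by rewrite inE (scX _ _ sigX ss) cs eqxx.
  right; right; exists i; split.
  - by have := bdX _ sigX; rewrite csg => h; apply/andP; split => //; lia.
  - rewrite card_in_imset ?cD //.
    move=> w1 w2; rewrite !inE => /andP[w1c _] /andP[w2c _] e.
    have : w1 \in w2 |: c by rewrite -e setU11.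
    by rewrite in_setU1 (negbTE w1c) orbF => /eqP.
  - rewrite U inE sigX csg addnC /=. by [].
  - by rewrite I cardc.
move=> r [[rX _] Ur Ir].
have sub : forall s, s \in r -> s \in r0 sigma c.
  move=> s sr; apply/(r0P csig cardc).
  split.
  - by rewrite -Ir; apply: bigcap_inf.
  - by rewrite -Ur; apply: bigcup_sup.
  - by move: (subsetP rX s sr); rewrite inE => /andP[_ /eqP].
apply/setP => s; apply/idP/idP; last exact: sub.
move/imsetP=> [w]; rewrite inE => /andP[wc ws] ->.
move: ws; rewrite -{1}Ur => /bigcupP [s' s'r ws'].
have := sub _ s'r; move/imsetP=> [w']; rewrite inE => /andP[w'c _] es'.
move: ws'; rewrite es' in_setU1 (negbTE wc) orbF => /eqP ew.
by rewrite ew -es'.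
Qed.
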